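(* Let $\mathcal{G}$ be an anonymous polymatrix game, fix an initial joint action $a_0$, a step-size sequence $(\alpha_k)_{k\ge1}$ in $(0,1]$ with $\sum_k\alpha_k=\infty$, $\sum_k\alpha_k^2<\infty$, and a deterministic tie-breaking rule for $\arg\max$. Run fictitious play (FP) and aggregate fictitious play (agg-FP), both from $a_0$ with these step sizes and tie-breaking rule. Then agg-FP converges, i.e. $\lim_{k\to\infty}\inf_{\pi_*\in\mathbb{NE}(\mathcal{G})}\|\hat\gamma_k-\pi_*\|=0$, if and only if FP converges, i.e. $\lim_{k\to\infty}\inf_{\pi_*\in\mathbb{NE}(\mathcal{G})}\|\hat\pi_k-\pi_*\|=0$.
   Context: Polymatrix: $r^i(a^i,a^{-i})=\sum_{j\ne i}r^{ij}(a^i,a^j)$. Anonymous: common action set $\mathbb{A}$ ($|\mathbb{A}|=n$), each $r^i(a^i,a^{-i})$ invariant under permutations of $a^{-i}$; then $r^i(a^i,a^{-i})=\bar r^i(a^i,\sigma(a^{-i}))$ with $\sigma(a^{-i})=\sum_{j\ne i}\mathds{1}\{a^j\}\in\mathbb{X}=\{\xi\in\mathbb{N}^n:\sum_l\xi_l=N-1\}$. $R^i(a^i,\pi^{-i})=\sum_{a^{-i}}r^i(a^i,a^{-i})\prod_{j\ne i}\pi^j(a^j)$, $\bar R^i(a^i,\mu)=\sum_{x}\bar r^i(a^i,x)\mu(x)$. FP: $\hat\pi^j_0=\mathds{1}\{a^j_0\}$, and for $k\ge1$, $\hat\pi^j_k=\hat\pi^j_{k-1}+\alpha_k(\mathds{1}\{a^j_k\}-\hat\pi^j_{k-1})$,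 with actions $a^i_{k+1}\in\arg\max_{a^i}R^i(a^i,\hat\pi^{-i}_k)$ (for $k\ge0$). agg-FP: $\hat\mu^i_0=\mathds{1}\{\sigma(a^{-i}_0)\}$, for $k\ge1$ $\hat\mu^i_k=\hat\mu^i_{k-1}+\alpha_k(\mathds{1}\{\sigma(a^{-i}_k)\}-\hat\mu^i_{k-1})$, actions $a^i_{k+1}\in\arg\max_{a^i}\bar R^i(a^i,\hat\mu^i_k)$, and empirical action frequencies $\hat\gamma^i_0=\mathds{1}\{a^i_0\}$, $\hat\gamma^i_k=\hat\gamma^i_{k-1}+\alpha_k(\mathds{1}\{a^i_k\}-\hat\gamma^i_{k-1})$. $\mathbb{NE}(\mathcal{G})$ is the set of mixed Nash equilibria: profiles $\pi_*$ with $R^i(\pi^i_*,\pi^{-i}_* )\ge R^i(\pi^i,\pi^{-i}_* )$ for all $i$ and $\pi^i\in\Delta(\mathbb{A})$. *)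

(* Defs.v *)
From HB Require Import structures.
From mathcomp Require Import all_boot all_order all_algebra.
From mathcomp Require Import all_classical all_reals all_analysis.
From mathcomp Require Import fingroup perm.
Set Implicit Arguments. Unset Strict Implicit. Unset Printing Implicit Defensive.
Import Order.TTheory GRing.Theory Num.Theory.
Import numFieldNormedType.Exports.
Local Open Scope ring_scope.
Local Open Scope classical_set_scope.

Section Game.
Variables (R : realType) (N n : nat).
Definition jact := {ffun 'I_N -> 'I_n}.
Definition rewards := 'I_N -> jact -> R.
Definition profile := 'I_N -> 'I_n -> R.

Definition polymatrix (r : rewards) : Prop :=
  exists rr : 'I_N -> 'I_N -> 'I_n -> 'I_n -> R,
    forall i (a : jact), r i a = \sum_(j | j != i) rr i j (a i) (a j).

Definition anonymous (r : rewards) : Prop :=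
  forall i (s : {perm 'I_N}), s i = i ->
    forall a : jact, r i [ffun j => a (s j)] = r i a.

Definition Rexp (r : rewards) (i : 'I_N) (ai : 'I_n) (pi : profile) : R :=
  \sum_(a : jact | a i == ai) r i a * \prod_(j | j != i) pi j (a j).

Definition Rmix (r : rewards) (i : 'I_N) (pii : 'I_n -> R) (pi : profile) : R :=
  \sum_(ai : 'I_n) pii ai * Rexp r i ai pi.

Definition is_distr (p : 'I_n -> R) : Prop :=
  (forall b, 0 <= p b) /\ \sum_(b : 'I_n) p b = 1.

Definition NE (r : rewards) : set profile :=
  [set pi | (forall i, is_distr (pi i)) /\
            forall i (pii : 'I_n -> R), is_distr pii ->
              Rmix r i (pi i) pi >= Rmix r i pii pi].

(* distance between profiles (l1 norm; all norms on this finite-dim space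
   are equivalent) *)
Definition pdist (p q : profile) : R :=
  \sum_(i : 'I_N) \sum_(b : 'I_n) `|p i b - q i b|.

(* aggregate: counts of the actions of the players other than i;
   X = {xi in N^n : sum xi = N-1} is embedded in {ffun 'I_n -> 'I_N.+1} *)
Definition aggT := {ffun 'I_n -> 'I_N.+1}.
Definition sigma (i : 'I_N) (a : jact) : aggT :=
  [ffun l => inord #|[set j | (j != i) && (a j == l)]|].

(* rbar^i(a^i, x) := r^i(a) for some a with a^i = ai and sigma(a^{-i}) = x;
   well defined by anonymity (0 outside X, where beliefs put no mass) *)
Definition rbar (r : rewards) (i : 'I_N) (ai : 'I_n) (x : aggT) : R :=
  if [pick a : jact | (a i == ai) && (sigma i a == x)] is Some a
  then r i a else 0.

Definition Rbar (r : rewards) (i : 'I_N) (ai : 'I_n) (mu : aggT -> R) : R :=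
  \sum_(x : aggT) rbar r i ai x * mu x.

Definition ind_act (b : 'I_n) : 'I_n -> R := fun c => if c == b then 1 else 0.
Definition ind_agg (y : aggT) : aggT -> R := fun x => if x == y then 1 else 0.

Definition tiebreak := nat -> 'I_N -> {ffun 'I_n -> R} -> 'I_n.
Definition is_argmax_rule (tb : tiebreak) : Prop :=
  forall k i (u : {ffun 'I_n -> R}) (b : 'I_n), u b <= u (tb k i u).

(* Fictitious play: state at step k = (a_k, pihat_k) *)
Fixpoint FP (r : rewards) (tb : tiebreak) (alpha : nat -> R) (a0 : jact)
    (k : nat) : jact * profile :=
  match k with
  | 0 => (a0, fun j => ind_act (a0 j))
  | k'.+1 =>
      let: (_, p) := FP r tb alpha a0 k' in
      let a' : jact := [ffun i => tb k' i [ffun ai => Rexp r i ai p]] in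
      (a', fun j b => p j b + alpha k * (ind_act (a' j) b - p j b))
  end.

Definition FP_belief r tb alpha a0 k := (FP r tb alpha a0 k).2.

(* Aggregate fictitious play: state at step k = (a_k, muhat_k, gammahat_k) *)
Fixpoint aggFP (r : rewards) (tb : tiebreak) (alpha : nat -> R) (a0 : jact)
    (k : nat) : jact * ('I_N -> aggT -> R) * profile :=
  match k with
  | 0 => (a0, fun i => ind_agg (sigma i a0), fun j => ind_act (a0 j))
  | k'.+1 =>
      let: (_, mu, g) := aggFP r tb alpha a0 k' in
      let a' : jact := [ffun i => tb k' i [ffun ai => Rbar r i ai (mu i)]] in
      (a',
       fun i x => mu i x + alpha k * (ind_agg (sigma i a') x - mu i x),
       fun j b => g j b + alpha k * (ind_act (a' j) b - g j b))
  end.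

Definition aggFP_freq r tb alpha a0 k := (aggFP r tb alpha a0 k).2.

Definition converges_to_NE (r : rewards) (p : nat -> profile) : Prop :=
  (fun k => inf [set pdist (p k) q | q in NE r] : R) @ \oo --> (0 : R).

End Game.

(* Main.v *)
Require Import Defs.
From HB Require Import structures.
From mathcomp Require Import all_boot all_order all_algebra.
From mathcomp Require Import all_classical all_reals all_analysis.
From mathcomp Require Import fingroup perm.
From mathcomp Require Import ring.
Import Order.TTheory GRing.Theory Num.Theory.
Import numFieldNormedType.Exports.
Local Open Scope ring_scope.
Local Open Scope classical_set_scope.

Lemma count_card (T : finType) (U : eqType) (F : T -> U) x :
  count_mem x (map F (enum T)) = #|[pred j | F j == x]|.
Proof. rewrite count_map cardE /enum_mem size_filter count_filter; apply: eq_count => y; by rewrite /= !inE andbT. Qed.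

Lemma csetE N n (i : 'I_N) (d : jact N n) l :
  #|[set j | (j != i) && (d j == l)]%classic| = #|[pred j | (j != i) && (d j == l)]|.
Proof. by apply: eq_card => j; rewrite !inE /in_set unfold_in asboolb. Qed.

Lemma sigma_card N n (i : 'I_N) (b c : jact N n) l :
  sigma i b = sigma i c ->
  #|[pred j | (j != i) && (b j == l)]| = #|[pred j | (j != i) && (c j == l)]|.
Proof.
move=> /(congr1 (fun f : aggT N n => val (f l))); rewrite !ffunE /= !csetE.
have H (d : jact N n) : (#|[pred j | (j != i) && (d j == l)]| <= N)%N.
  by apply: leq_trans (max_card _) _; rewrite card_ord.
by rewrite !inordK ?ltnS ?H.
Qed.

Lemma anon_eq (R : realType) N n (r : rewards R N n) i (b c : jact N n) :
  anonymous r -> b i = c i -> sigma i b = sigma i c -> r i b = r i c.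
Proof.
move=> anr ebc sbc.
have : perm_eq [tuple (j == i, c j) | j < N] [tuple (j == i, b j) | j < N].
  apply/allP => -[t l] _; apply/eqP; rewrite /= !count_card.
  case: t.
    apply: eq_card => j /=; rewrite !inE /= !xpair_eqE.
    by rewrite eqb_id; case: eqP => //= ->; rewrite ebc.
  have E (d : jact N n) j : ((j == i, d j) == (false, l)) = (j != i) && (d j == l).
    by case: (j == i) => /=; [apply/eqP; case | apply/eqP/eqP => [[]|->]].
  transitivity #|[pred j | (j != i) && (c j == l)]|.
    by apply: eq_card => j; rewrite !inE /= E.
  transitivity #|[pred j | (j != i) && (b j == l)]|; last first.
    by apply: eq_card => j; rewrite !inE /= E.
  by apply: sigma_card; rewrite sbc.
move/tuple_permP => [s /val_inj Hs].
have Hj j : (j == i, c j) = (s j == i, b (s j)).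
  by have := congr1 (fun t : N.-tuple _ => tnth t j) Hs; rewrite /= !tnth_mktuple.
have si : s i = i by have := Hj i; rewrite eqxx => -[/esym/eqP].
rewrite -(anr i s si b); congr (r i); apply/ffunP => j; rewrite ffunE.
by have := Hj j => -[_ ->].
Qed.

Section Main.
Variables (R : realType) (N n : nat).

Lemma E_coord (q : 'I_N -> 'I_n -> R) (j : 'I_N) (g : 'I_n -> R) :
  (forall k, k != j -> \sum_b q k b = 1) ->
  \sum_(a : jact N n) g (a j) * \prod_k q k (a k) = \sum_b g b * q j b.
Proof.
move=> Hq.
pose q' k x := if k == j then g x * q k x else q k x.
transitivity (\sum_(a : jact N n) \prod_k q' k (a k)).
  apply: eq_bigr => a _; rewrite (bigD1 j) //= [in RHS](bigD1 j) //= /q' eqxx mulrA.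
  by congr (_ * _); apply: eq_bigr => k /negbTE ->.
rewrite -bigA_distr_bigA (bigD1 j) //= [X in _ * X]big1 ?mulr1.
  by apply: eq_bigr => b _; rewrite /q' eqxx.
by move=> k kj; rewrite /q' (negbTE kj); apply: Hq.
Qed.

Lemma sum_ind_act (F : 'I_n -> R) b : \sum_x F x * ind_act R b x = F b.
Proof.
rewrite (bigD1 b) //= /ind_act eqxx mulr1 big1 ?addr0 // => x /negbTE ->.
by rewrite mulr0.
Qed.

Lemma sum_ind_agg (F : aggT N n -> R) y : \sum_x F x * ind_agg R y x = F y.
Proof.
rewrite (bigD1 y) //= /ind_agg eqxx mulr1 big1 ?addr0 // => x /negbTE ->.
by rewrite mulr0.
Qed.

Lemma sum_upd (I : finType) (F G H : I -> R) (al : R) :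
  \sum_x F x * (G x + al * (H x - G x)) =
  (1 - al) * \sum_x F x * G x + al * \sum_x F x * H x.
Proof.
rewrite !mulr_sumr -big_split /=; apply: eq_bigr => x _; ring.
Qed.

Variable (rr : 'I_N -> 'I_N -> 'I_n -> 'I_n -> R) (r : rewards R N n).
Hypothesis Hrr : forall i (a : jact N n), r i a = \sum_(j | j != i) rr i j (a i) (a j).
Hypothesis anr : anonymous r.

Lemma Rexp_poly i ai (p : profile R N n) :
  (forall j, j != i -> \sum_b p j b = 1) ->
  Rexp r i ai p = \sum_(j | j != i) \sum_b rr i j ai b * p j b.
Proof.
move=> Hp.
pose q k := if k == i then ind_act R ai else p k.
have -> : Rexp r i ai p = \sum_(a : jact N n) r i a * \prod_k q k (a k).
  rewrite /Rexp big_mkcond; apply: eq_bigr => a _.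
  rewrite [in RHS](bigD1 i) //= /q eqxx /ind_act.
  case: (a i == ai); last by rewrite mul0r mulr0.
  by rewrite mul1r; congr (_ * _); apply: eq_bigr => k /negbTE ->.
under eq_bigr do rewrite Hrr big_distrl.
rewrite exchange_big /=; apply: eq_bigr => j ji.
transitivity (\sum_(a : jact N n) rr i j ai (a j) * \prod_k q k (a k)).
  apply: eq_bigr => a _; rewrite (bigD1 i) //= /q eqxx /ind_act.
  by case: eqP => [->|_]; rewrite ?mul0r ?mulr0.
rewrite E_coord; first by apply: eq_bigr => b _; rewrite /q (negbTE ji).
move=> k kj; rewrite /q; case: eqP => [_|/eqP ki]; last exact: Hp.
by rewrite -(sum_ind_act (fun _ => 1) ai); apply: eq_bigr => x _; rewrite mul1r.
Qed.

Lemma rbar_eq i ai (a : jact N n) :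
  rbar r i ai (sigma i a) = \sum_(j | j != i) rr i j ai (a j).
Proof.
pose c : jact N n := [ffun j => if j == i then ai else a j].
have sc : sigma i c = sigma i a.
  apply/ffunP => l; rewrite !ffunE !csetE; congr inord.
  by apply: eq_card => j; rewrite !inE /= ffunE; case: (j == i).
have rc : r i c = \sum_(j | j != i) rr i j ai (a j).
  rewrite Hrr ffunE eqxx; apply: eq_bigr => j /negbTE ji.
  by rewrite ffunE ji.
rewrite /rbar; case: pickP => [b /andP[/eqP bi /eqP sb]|H].
  rewrite -rc; apply: anon_eq => //; first by rewrite bi ffunE eqxx.
  by rewrite sb sc.
by have := H c; rewrite sc eqxx andbT /c ffunE eqxx /= eqxx.
Qed.

Variables (tb : tiebreak R N n) (alpha : nat -> R) (a0 : jact N n).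

Lemma main_inv k :
  (aggFP r tb alpha a0 k).1.1 = (FP r tb alpha a0 k).1 /\
  (aggFP r tb alpha a0 k).2 = (FP r tb alpha a0 k).2 /\
  (forall j, \sum_b (FP r tb alpha a0 k).2 j b = 1) /\
  (forall i ai, Rbar r i ai ((aggFP r tb alpha a0 k).1.2 i) =
                Rexp r i ai (FP r tb alpha a0 k).2).
Proof.
elim: k => [|k IH].
  split=> //; split=> //; split.
    by move=> j /=; rewrite -(sum_ind_act (fun _ => 1) (a0 j)); apply: eq_bigr => x _; rewrite mul1r.
  move=> i ai /=; rewrite /Rbar sum_ind_agg rbar_eq Rexp_poly.
    by apply: eq_bigr => j _; rewrite sum_ind_act.
  by move=> j _; rewrite -(sum_ind_act (fun _ => 1) (a0 j)); apply: eq_bigr => x _; rewrite mul1r.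
move: IH => /=.
case: (aggFP r tb alpha a0 k) => [[aA mu] g]; case: (FP r tb alpha a0 k) => [aF p] /=.
move=> [_ [-> [Hs HR]]].
have -> : [ffun i => tb k i [ffun ai => Rbar r i ai (mu i)]] =
          [ffun i => tb k i [ffun ai => Rexp r i ai p]].
  apply/ffunP => i; rewrite !ffunE; congr tb; apply/ffunP => ai; rewrite !ffunE HR //.
set a' := [ffun i => tb k i [ffun ai => Rexp r i ai p]].
have Hs' : forall j, \sum_b (p j b + alpha k.+1 * (ind_act R (a' j) b - p j b)) = 1.
  move=> j; transitivity (\sum_b 1 * (p j b + alpha k.+1 * (ind_act R (a' j) b - p j b))).
    by apply: eq_bigr => b _; rewrite mul1r.
  rewrite (sum_upd _ (fun _ => 1) (p j) (ind_act R (a' j))) sum_ind_act.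
  rewrite (eq_bigr (fun b => p j b)) ?Hs; last by move=> *; rewrite mul1r.
  ring.
split=> //; split=> //; split=> // i ai.
rewrite /Rbar sum_upd sum_ind_agg rbar_eq -/(Rbar r i ai (mu i)) HR.
rewrite Rexp_poly; last by move=> j _; apply: Hs.
rewrite Rexp_poly; last by move=> j _; apply: Hs'.
under [in RHS]eq_bigr do rewrite sum_upd sum_ind_act.
rewrite big_split /= -!mulr_sumr.
done.
Qed.

End Main.

Theorem lemma4 (R : realType) (N n : nat) (r : rewards R N n)
  (a0 : jact N n) (alpha : nat -> R) (tb : tiebreak R N n) :
  polymatrix r -> anonymous r ->
  (forall k, (1 <= k)%N -> 0 < alpha k <= 1) ->
  (\sum_(1 <= k < m) alpha k) @[m --> \oo] --> +oo ->
  cvg ((\sum_(1 <= k < m) alpha k ^+ 2) @[m --> \oo]) ->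
  is_argmax_rule tb ->
  (converges_to_NE r (aggFP_freq r tb alpha a0) <->
   converges_to_NE r (FP_belief r tb alpha a0)).
Proof.
move=> [rr Hrr] anr _ _ _ _.
have -> : aggFP_freq r tb alpha a0 = FP_belief r tb alpha a0.
  apply: funext => k; rewrite /aggFP_freq /FP_belief.
  by have [_ [-> _]] := @main_inv _ _ _ _ _ Hrr anr tb alpha a0 k.
by [].
Qed.
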